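(* Consider the dynamic panel logit AR(2) model with $T=4$: binary outcomes $Y_{-1},Y_0,Y_1,\dots,Y_4\in\{0,1\}$, regressors $X=(X_1,\dots,X_4)\in\mathbb{R}^{K\times4}$, fixed effect $A\in\mathbb{R}$, with, for $t\in\{1,\dots,4\}$, $$\Pr(Y_t=1\mid Y_{-1},\dots,Y_{t-1},X,A)=\frac{\exp(X_t'\beta_0+Y_{t-1}\gamma_{0,1}+Y_{t-2}\gamma_{0,2}+A)}{1+\exp(X_t'\beta_0+Y_{t-1}\gamma_{0,1}+Y_{t-2}\gamma_{0,2}+A)}$$ and true parameters $\beta_0\in\mathbb{R}^K$, $\gamma_0=(\gamma_{0,1},\gamma_{0,2})\in\mathbb{R}^2$. For initial conditions $y^{(0)}=(y_{-1},y_0)\in\{0,1\}^2$, $y=(y_1,\dots,y_4)\in\{0,1\}^4$, $x\in\mathbb{R}^{K\times4}$, $\beta\in\mathbb{R}^K$, $\gamma=(\gamma_1,\gamma_2)\in\mathbb{R}^2$, let $z_t=x_t'\beta+y_{t-1}\gamma_1+y_{t-2}\gamma_2$ and $z_{ts}=z_t-z_s$. Define $$m^{(a)}_{y^{(0)}}=\begin{cases}e^{z_{23}}-e^{z_{43}}&y=(0,0,1,0),\\ e^{z_{24}}-1&y=(0,0,1,1),\\ -1&(y_1,y_2)=(0,1),\\ e^{z_{41}+\gamma_1}&(y_1,y_2,y_3)=(1,0,0),\\ e^{z_{41}}[1+e^{z_{23}}-e^{z_{43}}]&y=(1,0,1,0),\\ e^{z_{21}}&y=(1,0,1,1),\\ 0&\text{otherwise},\end{cases}\qquad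 m^{(b)}_{y^{(0)}}=\begin{cases}e^{z_{12}}&y=(0,1,0,0),\\ e^{z_{14}}[1+e^{z_{32}}-e^{z_{34}}]&y=(0,1,0,1),\\ e^{z_{14}+\gamma_1}&(y_1,y_2,y_3)=(0,1,1),\\ -1&(y_1,y_2)=(1,0),\\ e^{z_{42}}-1&y=(1,1,0,0),\\ e^{z_{32}}-e^{z_{34}}&y=(1,1,0,1),\\0&\text{otherwise},\end{cases}$$ $$m^{(c)}_{y^{(0)}}=\begin{cases}[e^{z_{24}}-1][1-e^{z_{34}}]&y=(0,0,0,1),\\ e^{z_{24}+\gamma_1}-1&(y_1,y_2,y_3)=(0,0,1),\\ -1&(y_1,y_2)=(0,1),\\ e^{z_{41}}&y=(1,0,0,0),\\ e^{z_{21}}[1+e^{z_{32}}-e^{z_{34}}]&y=(1,0,0,1),\\ e^{z_{21}}&(y_1,y_2,y_3)=(1,0,1),\\0&\text{otherwise},\end{cases}\qquad m^{(d)}_{y^{(0)}}=\begin{cases}e^{z_{12}}&(y_1,y_2,y_3)=(0,1,0),\\ e^{z_{12}}[1+e^{z_{23}}-e^{z_{43}}]&y=(0,1,1,0),\\ e^{z_{14}}&y=(0,1,1,1),\\ -1&(y_1,y_2)=(1,0),\\ e^{z_{42}+\gamma_1}-1&(y_1,y_2,y_3)=(1,1,0),\\ [e^{z_{42}}-1][1-e^{z_{43}}]&y=(1,1,1,0),\\0&\text{otherwise},\end{cases}$$ all as functions of $(y,x,\beta,\gamma)$. Then for all $y^{(0)}\in\{0,1\}^2$, $x\in\mathbb{R}^{K\times4}$,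 $\alpha\in\mathbb{R}$ and $\xi\in\{a,b,c,d\}$, $$\mathbb{E}\big[m^{(\xi)}_{y^{(0)}}(Y,X,\beta_0,\gamma_0)\mid (Y_{-1},Y_0)=y^{(0)},X=x,A=\alpha\big]=0,$$ where $Y=(Y_1,\dots,Y_4)$.
   Context: The joint distribution of the initial conditions, $X$ and $A$ is unrestricted; only the conditional law of $(Y_1,\dots,Y_4)$ given $((Y_{-1},Y_0),X,A)$ is specified by the model. In $z_t$, $y_{-1},y_0$ are the initial conditions. *)

(* Defs.v *)
From HB Require Import structures.
From mathcomp Require Import all_boot all_order all_algebra.
From mathcomp Require Import all_classical all_reals all_analysis.
Set Implicit Arguments. Unset Strict Implicit. Unset Printing Implicit Defensive.
Import Order.TTheory GRing.Theory Num.Theory.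
Local Open Scope ring_scope.

Section Defs.
Variables (R : realType) (K : nat).

Definition b2R (b : bool) : R := if b then 1 else 0.

(* Outcome path indexed with offset 2:
   Ypath ym1 y0 y1 y2 y3 y4 (t+1) = y_t  for t = -1, 0, 1, ..., 4. *)
Definition Ypath (ym1 y0 y1 y2 y3 y4 : bool) (i : nat) : bool :=
  match i with
  | 0 => ym1 | 1 => y0 | 2 => y1 | 3 => y2 | 4 => y3 | _ => y4
  end.

(* x_t' beta for t in {1,..,4}; x is K x 4, column t-1 is x_t *)
Definition xbeta (x : 'M[R]_(K, 4)) (beta : 'cV[R]_K) (t : nat) : R :=
  \sum_(k < K) x k (@inord 3 t.-1) * beta k ord0.

Definition zt (x : 'M[R]_(K, 4)) (beta : 'cV[R]_K) (g1 g2 : R)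
  (Y : nat -> bool) (t : nat) : R :=
  xbeta x beta t + b2R (Y t) * g1 + b2R (Y t.-1) * g2.

Inductive moment := mom_a | mom_b | mom_c | mom_d.

Definition mom_fun (xi : moment) (ym1 y0 : bool) (y1 y2 y3 y4 : bool)
  (x : 'M[R]_(K, 4)) (beta : 'cV[R]_K) (g1 g2 : R) : R :=
  let Y := Ypath ym1 y0 y1 y2 y3 y4 in
  let z := zt x beta g1 g2 Y in
  let e t s := expR (z t - z s) in
  match xi with
  | mom_a =>
    match y1, y2, y3, y4 with
    | false, false, true, false => e 2%N 3%N - e 4%N 3%N
    | false, false, true, true => e 2%N 4%N - 1
    | false, true, _, _ => -1
    | true, false, false, _ => expR (z 4%N - z 1%N + g1)
    | true, false, true, false => e 4%N 1%N * (1 + e 2%N 3%N - e 4%N 3%N)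
    | true, false, true, true => e 2%N 1%N
    | _, _, _, _ => 0
    end
  | mom_b =>
    match y1, y2, y3, y4 with
    | false, true, false, false => e 1%N 2%N
    | false, true, false, true => e 1%N 4%N * (1 + e 3%N 2%N - e 3%N 4%N)
    | false, true, true, _ => expR (z 1%N - z 4%N + g1)
    | true, false, _, _ => -1
    | true, true, false, false => e 4%N 2%N - 1
    | true, true, false, true => e 3%N 2%N - e 3%N 4%N
    | _, _, _, _ => 0
    end
  | mom_c =>
    match y1, y2, y3, y4 with
    | false, false, false, true => (e 2%N 4%N - 1) * (1 - e 3%N 4%N)
    | false, false, true, _ => expR (z 2%N - z 4%N + g1) - 1
    | false, true, _, _ => -1
    | true, false, false, false => e 4%N 1%N
    | true, false, false, true => e 2%N 1%N * (1 + e 3%N 2%N - e 3%N 4%N)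
    | true, false, true, _ => e 2%N 1%N
    | _, _, _, _ => 0
    end
  | mom_d =>
    match y1, y2, y3, y4 with
    | false, true, false, _ => e 1%N 2%N
    | false, true, true, false => e 1%N 2%N * (1 + e 2%N 3%N - e 4%N 3%N)
    | false, true, true, true => e 1%N 4%N
    | true, false, _, _ => -1
    | true, true, false, _ => expR (z 4%N - z 2%N + g1) - 1
    | true, true, true, false => (e 4%N 2%N - 1) * (1 - e 4%N 3%N)
    | _, _, _, _ => 0
    end
  end.

Definition logistic (u : R) : R := expR u / (1 + expR u).

(* Pr(Y_t = b | Y_{-1..t-1}, X = x, A = alpha) under the logit AR(2) model *)
Definition step_prob (x : 'M[R]_(K, 4)) (beta0 : 'cV[R]_K) (g1 g2 alpha : R)
  (Y : nat -> bool) (t : nat) : R :=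
  let p := logistic (zt x beta0 g1 g2 Y t + alpha) in
  if Y t.+1 then p else 1 - p.

Definition path_prob (x : 'M[R]_(K, 4)) (beta0 : 'cV[R]_K) (g1 g2 alpha : R)
  (ym1 y0 y1 y2 y3 y4 : bool) : R :=
  let Y := Ypath ym1 y0 y1 y2 y3 y4 in
  \prod_(1 <= t < 5) step_prob x beta0 g1 g2 alpha Y t.

Definition cond_exp (x : 'M[R]_(K, 4)) (beta0 : 'cV[R]_K) (g1 g2 alpha : R)
  (ym1 y0 : bool) (f : bool -> bool -> bool -> bool -> R) : R :=
  \sum_(y1 : bool) \sum_(y2 : bool) \sum_(y3 : bool) \sum_(y4 : bool)
    f y1 y2 y3 y4 * path_prob x beta0 g1 g2 alpha ym1 y0 y1 y2 y3 y4.

End Defs.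

(* Main.v *)
Require Import Defs.
From HB Require Import structures.
From mathcomp Require Import all_boot all_order all_algebra.
From mathcomp Require Import all_classical all_reals all_analysis.
From mathcomp Require Import ring lra.
Import Order.TTheory GRing.Theory Num.Theory.
Local Open Scope ring_scope.

Ltac pos := repeat first [assumption | exact: ltr01 | apply: addr_gt0 | apply: mulr_gt0].

Theorem lemma3 (R : realType) (K : nat) (beta0 : 'cV[R]_K) (g01 g02 : R)
  (ym1 y0 : bool) (x : 'M[R]_(K, 4)) (alpha : R) (xi : moment) :
  cond_exp x beta0 g01 g02 alpha ym1 y0
    (fun y1 y2 y3 y4 => mom_fun xi ym1 y0 y1 y2 y3 y4 x beta0 g01 g02) = 0.
Proof.
rewrite /cond_exp /path_prob /step_prob /mom_fun /zt /logistic.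
rewrite /index_iota /= !big_bool /= !big_cons !big_nil /=.
set u1 := xbeta x beta0 1. set u2 := xbeta x beta0 2.
set u3 := xbeta x beta0 3. set u4 := xbeta x beta0 4.
have bt : b2R R true = 1 by [].
have bf : b2R R false = 0 by [].
rewrite ?(bt, bf, mul1r, mul0r, addr0, add0r, expRD, expRB, expR0, expRN).
have P1 := expR_gt0 u1. have P2 := expR_gt0 u2. have P3 := expR_gt0 u3.
have P4 := expR_gt0 u4. have PA := expR_gt0 alpha. have PG1 := expR_gt0 g01.
have PG2 := expR_gt0 g02.
have Q1 := expR_gt0 (b2R R y0 * g01). have Q2 := expR_gt0 (b2R R ym1 * g02).
have Q3 := expR_gt0 (b2R R y0 * g02).
move: P1 P2 P3 P4 PA PG1 PG2 Q1 Q2 Q3.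
move: (expR u1) (expR u2) (expR u3) (expR u4) (expR alpha) (expR g01) (expR g02)
  (expR (b2R R y0 * g01)) (expR (b2R R ym1 * g02)) (expR (b2R R y0 * g02)).
move=> E1 E2 E3 E4 A G1 G2 H1 H2 H3 P1 P2 P3 P4 PA PG1 PG2 Q1 Q2 Q3.
case: xi.
all: field; repeat (apply/andP; split); apply: lt0r_neq0; pos.
Qed.
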